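(* Let $A>1$. If a subset $B\subset(\mathbf R_{\ge0})^2$ contains no $(A+1)$-subgeometric sequence (i.e. there is no $(A+1)$-subgeometric sequence all of whose terms lie in $B$), then $B$ is $A$-small.
   Context: $(\mathbf R_{\ge0})^2$ carries the norm $\|(x,y)\|=x+y$ and associated $\ell^1$ distance; $\mathrm{diam}$ denotes diameter for this distance. For $U\subset(\mathbf R_{\ge0})^2$, $m_U=\inf\{\|(x,y)\|:(x,y)\in U\}$. A sequence $(U_n)$ of subsets is disjointly unbounded if $U_{n+1}\cap\bigcup_{i\le n}U_i=\emptyset$ for all $n$ and $m_{U_n}\to\infty$; it is $A$-bounded if $\mathrm{diam}(U_n\cup U_{n-1})\le A\cdot m_{U_{n-1}}$ for all $n$. $B$ is $A$-small if for every disjointly unbounded $A$-bounded sequence $(U_n)$ there exists $n_0$ with $U_{n_0}\cap B=\emptyset$. For a real $A'>0$, a sequence $((x_n,y_n))_{n\in\mathbf N}$ in $(\mathbf R_{\ge0})^2$ is $A'$-subgeometric if $\|(x_n,y_n)\|\to\infty$ and there is $n_0$ such that $\|(x_n,y_n)\|\le A'\|(x_{n-1},y_{n-1})\|$ for all $n\ge n_0$. *)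

(* Defs.v *)
From Stdlib Require Import Reals.
From Coquelicot Require Import Coquelicot.
Open Scope R_scope.

Definition quadrant (p : R * R) : Prop := 0 <= fst p /\ 0 <= snd p.
Definition in_quadrant (U : R * R -> Prop) : Prop := forall p, U p -> quadrant p.

Definition nrm (p : R * R) : R := fst p + snd p.
Definition dist1 (p q : R * R) : R := Rabs (fst p - fst q) + Rabs (snd p - snd q).

(* m_U = inf { ||p|| : p in U }  (= +oo for empty U) *)
Definition mU (U : R * R -> Prop) : Rbar := Glb_Rbar (fun r => exists p, U p /\ r = nrm p).

Definition diam (U : R * R -> Prop) : Rbar :=
  Lub_Rbar (fun r => exists p q, U p /\ U q /\ r = dist1 p q).

Definition setU2 (U V : R * R -> Prop) : R * R -> Prop := fun p => U p \/ V p.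

Definition disjointly_unbounded (U : nat -> R * R -> Prop) : Prop :=
  (forall n p, U (S n) p -> ~ (exists i, (i <= n)%nat /\ U i p)) /\
  (forall M : R, exists N, forall n, (N <= n)%nat -> Rbar_le M (mU (U n))).

Definition A_bounded (A : R) (U : nat -> R * R -> Prop) : Prop :=
  forall n, (1 <= n)%nat ->
    Rbar_le (diam (setU2 (U n) (U (n - 1)%nat))) (Rbar_mult A (mU (U (n - 1)%nat))).

Definition A_small (A : R) (B : R * R -> Prop) : Prop :=
  forall U : nat -> R * R -> Prop,
    (forall n, in_quadrant (U n)) ->
    disjointly_unbounded U -> A_bounded A U ->
    exists n0, forall p, ~ (U n0 p /\ B p).

Definition subgeometric (A' : R) (x : nat -> R * R) : Prop :=
  (forall n, quadrant (x n)) /\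
  is_lim_seq (fun n => nrm (x n)) p_infty /\
  (exists n0, forall n, (n0 <= n)%nat -> (1 <= n)%nat ->
     nrm (x n) <= A' * nrm (x (n - 1)%nat)).

(* Main.v *)
Require Import Defs.
From Stdlib Require Import Reals Lra Classical ClassicalEpsilon.
From Coquelicot Require Import Coquelicot.
Open Scope R_scope.

Lemma mU_le (U : R * R -> Prop) p : U p -> Rbar_le (mU U) (Finite (nrm p)).
Proof.
  intro H. unfold mU. destruct (Glb_Rbar_correct (fun r => exists p, U p /\ r = nrm p)) as [H1 _].
  apply H1. exists p; auto.
Qed.

Lemma mU_ge0 (U : R * R -> Prop) : in_quadrant U -> Rbar_le (Finite 0) (mU U).
Proof.
  intro HQ. unfold mU. destruct (Glb_Rbar_correct (fun r => exists p, U p /\ r = nrm p)) as [_ H2].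
  apply H2. intros r [p [Hp ->]]. simpl. destruct (HQ p Hp). unfold nrm. lra.
Qed.

Lemma diam_ge (U : R * R -> Prop) p q : U p -> U q -> Rbar_le (Finite (dist1 p q)) (diam U).
Proof.
  intros Hp Hq. unfold diam.
  destruct (Lub_Rbar_correct (fun r => exists p q, U p /\ U q /\ r = dist1 p q)) as [H1 _].
  apply H1. exists p, q; auto.
Qed.

Lemma nrm_dist p q : nrm p <= nrm q + dist1 p q.
Proof.
  unfold nrm, dist1. destruct p as [a b], q as [c d]; simpl.
  pose proof (Rle_abs (a - c)). pose proof (Rle_abs (b - d)). lra.
Qed.

Theorem lemmaA (A : R) (B : R * R -> Prop) :
  1 < A ->
  in_quadrant B ->
  ~ (exists x : nat -> R * R, subgeometric (A + 1) x /\ forall n, B (x n)) ->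
  A_small A B.
Proof.
  intros HA HB Hno U HQ [Hdis Hunb] Hbd.
  apply NNPP. intro Hns.
  assert (Hex : forall n, exists p, U n p /\ B p).
  { intro n. apply NNPP. intro Hn. apply Hns. exists n. intros p Hp. apply Hn. exists p. exact Hp. }
  set (x := fun n => proj1_sig (constructive_indefinite_description _ (Hex n))).
  assert (Hx : forall n, U n (x n) /\ B (x n)).
  { intro n. unfold x. exact (proj2_sig (constructive_indefinite_description _ (Hex n))). }
  apply Hno. exists x. split; [|intro n; apply Hx].
  split; [intro n; apply HB, Hx|]. split.
  - apply is_lim_seq_spec. intro M. destruct (Hunb (M+1)) as [N HN]. exists N. intros n Hn.
    specialize (HN n Hn). pose proof (mU_le (U n) (x n) (proj1 (Hx n))).
    pose proof (mU_ge0 (U n) (HQ n)).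
    destruct (mU (U n)) eqn:E; simpl in *; try contradiction; lra.
  - exists 1%nat. intros n _ Hn.
    specialize (Hbd n Hn).
    pose proof (mU_le (U (n-1)%nat) (x (n-1)%nat) (proj1 (Hx (n-1)%nat))).
    pose proof (mU_ge0 (U (n-1)%nat) (HQ (n-1)%nat)).
    pose proof (diam_ge (setU2 (U n) (U (n-1)%nat)) (x n) (x (n-1)%nat)
      (or_introl (proj1 (Hx n))) (or_intror (proj1 (Hx (n-1)%nat)))).
    pose proof (nrm_dist (x n) (x (n-1)%nat)).
    destruct (mU (U (n-1)%nat)) as [m| |] eqn:E; simpl in *; try contradiction.
    destruct (diam (setU2 (U n) (U (n - 1)%nat))) as [d| |]; simpl in *; try contradiction.
    assert (0 <= nrm (x (n-1)%nat)) by lra. nra.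
Qed.
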